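(* Let $c\ge 5$ and $g\ge 2$. The free-nilpotent complex Lie algebra $N(c,g)$ does not admit a periodic prederivation.
   Context: $N(c,g)$ denotes the free-nilpotent complex Lie algebra of nilpotency class $c$ on $g$ generators. A linear map $P:\mathfrak{g}\to\mathfrak{g}$ is a prederivation if $P([x,[y,z]])=[P(x),[y,z]]+[x,[P(y),z]]+[x,[y,P(z)]]$ for all $x,y,z\in\mathfrak{g}$; it is periodic if $P^m=\mathrm{id}$ for some integer $m\ge 1$. *)

(* Defs.v *)
From HB Require Import structures.
From mathcomp Require Import all_boot all_algebra.
From mathcomp Require Import complex.
From mathcomp Require Import Rstruct.
Unset Printing Implicit Defensive.
Import GRing.Theory.
Local Open Scope ring_scope.

Definition CC : numClosedFieldType := (Rdefinitions.R)[i].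

Record lieAlgebra (F : fieldType) := LieAlgebra {
  lie_space :> lmodType F;
  lie_bracket : lie_space -> lie_space -> lie_space;
  lie_linear_l : forall z, linear (fun x => lie_bracket x z);
  lie_linear_r : forall x, linear (lie_bracket x);
  lie_alt : forall x, lie_bracket x x = 0;
  lie_jacobi : forall x y z,
    lie_bracket x (lie_bracket y z) + lie_bracket y (lie_bracket z x)
      + lie_bracket z (lie_bracket x y) = 0
}.

Arguments lie_bracket {F} L : rename.

Fixpoint rbracket (F : fieldType) (L : lieAlgebra F) (n : nat)
    (x : nat -> L) {struct n} : L :=
  match n with
  | 0%N => x 0%N
  | n'.+1 => lie_bracket L (x 0%N) (@rbracket F L n' (fun i => x i.+1))
  end.
Arguments rbracket {F} L n x.

(* L is nilpotent of class at most c: the (c+1)-st term of the lower central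
   series vanishes, i.e. all right-normed brackets of c+1 elements vanish
   (these span gamma_{c+1}(L)). *)
Definition nilpotent_class_le {F : fieldType} (c : nat) (L : lieAlgebra F) :=
  forall x : nat -> L, rbracket L c x = 0.

Definition lie_hom {F : fieldType} {L M : lieAlgebra F} (f : L -> M) :=
  linear f /\ forall x y, f (lie_bracket L x y) = lie_bracket M (f x) (f y).

Definition is_free_nilpotent {F : fieldType} (c g : nat) (L : lieAlgebra F)
    (x : 'I_g -> L) :=
  nilpotent_class_le c L /\
  forall (M : lieAlgebra F) (y : 'I_g -> M), nilpotent_class_le c M ->
    exists f : L -> M,
      [/\ lie_hom f, (forall i, f (x i) = y i) &
          forall f' : L -> M, lie_hom f' -> (forall i, f' (x i) = y i) ->
            forall v, f' v = f v].

Definition prederivation {F : fieldType} {L : lieAlgebra F} (P : L -> L) :=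
  linear P /\
  forall x y z,
    P (lie_bracket L x (lie_bracket L y z)) =
      lie_bracket L (P x) (lie_bracket L y z)
      + lie_bracket L x (lie_bracket L (P y) z)
      + lie_bracket L x (lie_bracket L y (P z)).

Definition periodic {T : Type} (P : T -> T) :=
  exists m : nat, (0 < m)%N /\ forall v, iter m P v = v.

(* Main.v *)
Require Import Defs.
From HB Require Import structures.
From mathcomp Require Import all_boot all_algebra all_fingroup all_solvable all_field.
From mathcomp Require Import ring.
Import GRing.Theory Num.Theory.
Local Open Scope ring_scope.

Definition V6 : lmodType CC := (CC^o * CC^o * CC^o * CC^o * CC^o * CC^o)%type.
Definition mk6 (a b c d e f : CC) : V6 := (a,b,c,d,e,f).
Definition br6 (u v : V6) : V6 :=
  let: (a0,a1,a2,a3,a4,a5) := u in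
  let: (b0,b1,b2,b3,b4,b5) := v in
  mk6 0 0 (a0*b1 - b0*a1) (a0*b2 - b0*a2) (a0*b3 - b0*a3) (a0*b4 - b0*a4).

Lemma scale6 k (a b c d e f : CC) : k *: mk6 a b c d e f = mk6 (k*a) (k*b) (k*c) (k*d) (k*e) (k*f).
Proof. by []. Qed.
Lemma add6 (a b c d e f a' b' c' d' e' f' : CC) :
  mk6 a b c d e f + mk6 a' b' c' d' e' f' = mk6 (a+a') (b+b') (c+c') (d+d') (e+e') (f+f').
Proof. by []. Qed.
Lemma opp6 (a b c d e f : CC) : - mk6 a b c d e f = mk6 (-a) (-b) (-c) (-d) (-e) (-f).
Proof. by []. Qed.
Lemma zero6 : (0 : V6) = mk6 0 0 0 0 0 0.
Proof. by []. Qed.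
Lemma scaleC (k a : CC^o) : k *: a = k * a. Proof. by []. Qed.

Ltac d6 u := case: u => [[[[[? ?] ?] ?] ?] ?].

Ltac fin6 := rewrite /br6 -/(mk6 _ _ _ _ _ _) ?scaleC ?scale6 ?add6 ?opp6 ?zero6;
  rewrite /mk6; congr (_,_,_,_,_,_); match goal with |- ?a = ?b => change (a = b :> CC) end; ring.

Ltac fin6' := rewrite ?scaleC ?scale6 ?add6 ?opp6 ?zero6 /mk6; congr (_,_,_,_,_,_); match goal with |- ?a = ?b => change (a = b :> CC) end; ring.

Lemma br6_lin_l z : linear (fun x => br6 x z).
Proof. d6 z => k u v; d6 u; d6 v; rewrite /= -!/(mk6 _ _ _ _ _ _). fin6'. Qed.
Lemma br6_lin_r x : linear (br6 x).
Proof. d6 x => k u v; d6 u; d6 v; rewrite /= -!/(mk6 _ _ _ _ _ _). fin6'. Qed.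
Lemma br6_alt x : br6 x x = 0.
Proof. d6 x; rewrite /= -!/(mk6 _ _ _ _ _ _). fin6'. Qed.
Lemma br6_jacobi x y z : br6 x (br6 y z) + br6 y (br6 z x) + br6 z (br6 x y) = 0.
Proof. d6 x; d6 y; d6 z; rewrite /= -!/(mk6 _ _ _ _ _ _). fin6'. Qed.

Definition M6 : lieAlgebra CC := @LieAlgebra CC V6 br6 br6_lin_l br6_lin_r br6_alt br6_jacobi.

Definition coord6 (v : V6) (i : nat) : CC :=
  let: (a0,a1,a2,a3,a4,a5) := v in
  match i with 0 => a0 | 1 => a1 | 2 => a2 | 3 => a3 | 4 => a4 | 5 => a5 | _ => 0 end.

Definition Q6 n (v : V6) := forall i, (i <= n)%N -> coord6 v i = 0.

Lemma Q6_1 a b : Q6 1 (br6 a b).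
Proof. by d6 a; d6 b; case=> [|[|i]]. Qed.

Lemma Q6_step n a v : Q6 n v -> Q6 n.+1 (br6 a v).
Proof.
d6 a; d6 v => H i Hi.
have /= h0 := H 0%N (leq0n _).
case: i Hi => [|[|[|[|[|[|i]]]]]] Hi //=; rewrite h0 mul0r subr0.
- by have /= -> := H 1%N Hi; rewrite mulr0.
- by have /= -> := H 2%N Hi; rewrite mulr0.
- by have /= -> := H 3%N Hi; rewrite mulr0.
- by have /= -> := H 4%N Hi; rewrite mulr0.
Qed.

Lemma Q6_5 v : Q6 5 v -> v = 0.
Proof.
d6 v => H.
have /= -> := H 0%N isT. have /= -> := H 1%N isT. have /= -> := H 2%N isT.
have /= -> := H 3%N isT. have /= -> := H 4%N isT. have /= -> := H 5%N isT.
by [].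
Qed.

Lemma Q6_rb n (x : nat -> M6) : Q6 n.+1 (rbracket M6 n.+1 x).
Proof.
elim: n x => [|n IH] x; first exact: Q6_1.
exact: Q6_step (IH _).
Qed.

Lemma M6_nil c : (5 <= c)%N -> nilpotent_class_le c M6.
Proof.
case: c => [//|c] Hc x; apply: Q6_5 => i Hi.
by apply: Q6_rb; apply: leq_trans Hc.
Qed.
Section LinF.
Variables (F : fieldType) (U W : lmodType F) (f : U -> W) (Hf : linear f).
Lemma lin0 : f 0 = 0.
Proof. have := Hf 1 0 0; rewrite !scale1r addr0 => H; apply: (addrI (f 0)); by rewrite addr0 -H. Qed.
Lemma linZ k a : f (k *: a) = k *: f a.
Proof. by rewrite -[k *: a]addr0 Hf lin0 addr0. Qed.
Lemma linD a b : f (a + b) = f a + f b.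
Proof. by rewrite -[a in LHS]scale1r Hf scale1r. Qed.
Lemma lin_sum (I : Type) (r : seq I) (Pr : pred I) (G : I -> U) :
  f (\sum_(i <- r | Pr i) G i) = \sum_(i <- r | Pr i) f (G i).
Proof. exact: (big_morph f linD lin0). Qed.
End LinF.
Arguments lin0 {F U W f}.
Arguments linZ {F U W f}.
Arguments linD {F U W f}.
Arguments lin_sum {F U W f} Hf {I}.

Lemma prim_root_CC (n : nat) : (n > 0)%N -> exists z : CC, n.-primitive_root z.
Proof.
pose p : {poly CC} := 'X^n - 1; have [r Dp] := closed_field_poly_normal p.
move=> n_gt0; rewrite (monicP _) ?monicXnsubC // scale1r in Dp.
have rn1: all n.-unity_root r by apply/allP=> z; rewrite -root_prod_XsubC -Dp.
have sz_r: (n < (size r).+1)%N.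
  by rewrite -(size_prod_XsubC r id) -Dp size_XnsubC.
have [|z] := hasP (has_prim_root n_gt0 rn1 _ sz_r); last by exists z.
by rewrite -separable_prod_XsubC -Dp separable_Xn_sub_1 // pnatr_eq0 -lt0n.
Qed.

Lemma geo_sum0 (x : CC) m : x ^+ m = 1 -> x != 1 -> \sum_(k < m) x ^+ k = 0.
Proof.
move=> xm x1; have := subrX1 x m; rewrite xm subrr => /esym/eqP.
by rewrite mulf_eq0 subr_eq0 (negbTE x1) /= => /eqP.
Qed.

Section Eigen.
Variables (V : lmodType CC) (P : V -> V) (HP : linear P) (n : nat)
  (Hper : forall v, iter n.+1 P v = v).

Definition Fsum (lam : CC) v := \sum_(j < n.+1) (lam ^+ (n.+1 - j)) *: iter j P v.

Lemma Fsum_eig lam v : lam ^+ n.+1 = 1 -> P (Fsum lam v) = lam *: Fsum lam v.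
Proof.
move=> Hl; rewrite /Fsum (lin_sum HP) big_ord_recr /= scaler_sumr big_ord_recl /=.
rewrite subn0 scalerA -exprS exprS Hl mulr1 (linZ HP) subSnn expr1 -iterS Hper.
rewrite addrC; congr (_ + _); apply: eq_bigr => j _.
rewrite (linZ HP) scalerA -exprS /bump /= add1n subSS subSn //; exact: ltnW (ltn_ord j).
Qed.

Lemma Fsum_total w v : n.+1.-primitive_root w ->
  \sum_(k < n.+1) Fsum (w ^+ k) v = n.+1%:R *: v.
Proof.
move=> pw; rewrite /Fsum exchange_big /= big_ord_recl /= subn0 -scaler_suml.
have -> : \sum_(k < n.+1) (w ^+ k) ^+ n.+1 = n.+1%:R.
  under eq_bigr => k _ do rewrite exprAC (prim_expr_order pw) expr1n.
  by rewrite sumr_const card_ord.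
rewrite big1 ?addr0 // => j _; rewrite -scaler_suml.
under eq_bigr => k _ do rewrite exprAC.
rewrite geo_sum0 ?scale0r //.
  by rewrite exprAC (prim_expr_order pw) expr1n.
rewrite -(prim_order_dvd pw) /bump /= add1n subSS.
apply/negP => /dvdn_leq; rewrite subn_gt0 ltn_ord => /(_ isT).
by rewrite ltnNge leq_subr.
Qed.

End Eigen.
Arguments Fsum {V}.
Arguments Fsum_eig {V P} HP {n}.
Arguments Fsum_total {V} P {n}.

Lemma eig_exists (V : lmodType CC) (P : V -> V) (HP : linear P) (m : nat)
  (Hm : (0 < m)%N) (Hper : forall v, iter m P v = v)
  (phi : V -> CC^o) (Hphi : linear phi) (v : V) (hv : phi v != 0) :
  exists e lam, lam ^+ m = 1 /\ P e = lam *: e /\ phi e != 0.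
Proof.
case: m Hm Hper => [//|n] _ Hper.
have [w pw] := @prim_root_CC n.+1 (ltn0Sn n).
case: (boolP [exists k : 'I_n.+1, phi (Fsum P n (w ^+ k) v) != 0]).
  case/existsP => k hk; exists (Fsum P n (w ^+ k) v), (w ^+ k); split => //.
    by rewrite exprAC (prim_expr_order pw) expr1n.
  by split => //; apply: Fsum_eig => //; rewrite exprAC (prim_expr_order pw) expr1n.
rewrite negb_exists => /forallP H; exfalso; move: hv.
have := congr1 phi (Fsum_total P w v pw).
rewrite (lin_sum Hphi) big1 => [|k _]; last by apply/eqP; rewrite -[_ == _]negbK H.
rewrite (linZ Hphi) => /esym/eqP; rewrite scaler_eq0 pnatr_eq0 /= => ->.
by [].
Qed.

Lemma unit_norm (x : CC) m : (0 < m)%N -> x ^+ m = 1 -> x * x^* = 1.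
Proof.
move=> m0 xm; have : `|x| ^+ m == 1 by rewrite -normrX xm normr1.
rewrite pexpr_eq1 // => /eqP n1.
by rewrite -normCK n1 expr1n.
Qed.

Lemma final_contra (z e : CC) m : (0 < m)%N -> z ^+ m = 1 -> e ^+ m = 1 ->
  (z + z + e) ^+ m = 1 -> (z + z + (z + z + e)) ^+ m = 1 -> False.
Proof.
move=> m0 /(unit_norm _ _ m0) a /(unit_norm _ _ m0) b /(unit_norm _ _ m0) p /(unit_norm _ _ m0) q.
rewrite !rmorphD in p q.
have : (8 : CC) = 0.
  have -> : (8 : CC) = - 8 * (z * z^* - 1) + (e * e^* - 1)
     - 2 * ((z + z + e) * (z^* + z^* + e^*) - 1)
     + ((z + z + (z + z + e)) * (z^* + z^* + (z^* + z^* + e^*)) - 1) by ring.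
  by rewrite a b p q !subrr !mulr0 !addr0 subrr.
by move/eqP; rewrite pnatr_eq0.
Qed.

Lemma coord6_lin i : linear (fun v : V6 => (coord6 v i : CC^o)).
Proof.
move=> k u v; d6 u; d6 v; rewrite /=.
by case: i => [|[|[|[|[|[|i]]]]]] //=; rewrite scaler0 addr0.
Qed.

Lemma coord6_ad4 a b : coord6 (br6 a (br6 a (br6 a (br6 a b)))) 5 =
  coord6 a 0 ^+ 3 * (coord6 a 0 * coord6 b 1 - coord6 a 1 * coord6 b 0).
Proof.
d6 a; d6 b; rewrite /=.
match goal with |- ?x = ?y => change (x = y :> CC) end; ring.
Qed.

Lemma lin_comp (F : fieldType) (U W X : lmodType F) (f : U -> W) (h : W -> X) :
  linear f -> linear h -> linear (fun v => h (f v)).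
Proof. by move=> Hf Hh k a b; rewrite Hf Hh. Qed.

Lemma eig_root (V : lmodType CC) (P : V -> V) (HP : linear P) m w lam :
  P w = lam *: w -> w != 0 -> iter m P w = w -> lam ^+ m = 1.
Proof.
move=> Hw w0 Hm.
have It : forall k, iter k P w = lam ^+ k *: w.
  elim=> [|k IH]; first by rewrite scale1r.
  by rewrite iterS IH (linZ HP) Hw scalerA exprSr.
move: Hm; rewrite It => /eqP; rewrite -subr_eq0 -{2}[w]scale1r -scalerBl.
by rewrite scaler_eq0 (negbTE w0) orbF subr_eq0 => /eqP.
Qed.

Theorem corollary5p13 :
  forall (c g : nat), (5 <= c)%N -> (2 <= g)%N ->
  forall (L : lieAlgebra CC) (x : 'I_g -> L),
    is_free_nilpotent c g L x ->
    ~ (exists P : L -> L, prederivation P /\ periodic P).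
Proof.
move=> c g Hc Hg L x [_ Luniv] [P [[HP Hpre] [m [Hm Hper]]]].
have g0 : (0 < g)%N by apply: leq_trans Hg.
pose i0 : 'I_g := Ordinal g0.
pose i1 : 'I_g := Ordinal Hg.
pose y : 'I_g -> M6 := fun i =>
  if val i == 0%N then mk6 1 0 0 0 0 0 else if val i == 1%N then mk6 0 1 0 0 0 0 else 0.
have [f [[Hf Hfb] Hfx _]] := Luniv M6 y (@M6_nil c Hc).
have brZl k a b : lie_bracket L (k *: a) b = k *: lie_bracket L a b by apply: (linZ (@lie_linear_l _ L b)).
have brZr k a b : lie_bracket L a (k *: b) = k *: lie_bracket L a b by apply: (linZ (@lie_linear_r _ L a)).
have br0r a : lie_bracket L a 0 = 0 by apply: (lin0 (@lie_linear_r _ L a)).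
pose l1 := fun v : L => (coord6 (f v) 0 : CC^o).
pose l2 := fun v : L => (coord6 (f v) 1 : CC^o).
have Hl1 : linear l1 by apply: lin_comp Hf (coord6_lin 0).
have Hl2 : linear l2 by apply: lin_comp Hf (coord6_lin 1).
have l1x0 : l1 (x i0) = 1 by rewrite /l1 Hfx.
have l1n : l1 (x i0) != 0 by rewrite l1x0 oner_neq0.
have [u [z [zm [Pu lu]]]] := @eig_exists L P HP m Hm Hper l1 Hl1 (x i0) l1n.
pose D := fun v : L => (l1 u * l2 v - l2 u * l1 v : CC^o).
have HD : linear D.
  move=> k a b; rewrite /D Hl1 Hl2.
  match goal with |- ?x = ?y => change (x = y :> CC) end.
  rewrite !scaleC; ring.
have Dx1 : D (x i1) != 0.
  by rewrite /D /l1 /l2 Hfx /y /= mulr1 mulr0 subr0.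
have [v [e [em [Pv Dv]]]] := @eig_exists L P HP m Hm Hper D HD (x i1) Dx1.
pose w2 := lie_bracket L u (lie_bracket L u v).
pose w4 := lie_bracket L u (lie_bracket L u w2).
have fw4 : coord6 (f w4) 5 != 0.
  rewrite /w4 /w2 !Hfb coord6_ad4.
  by rewrite mulf_neq0 // expf_neq0.
have w4n : w4 != 0 by apply: contraNneq fw4 => ->; rewrite (lin0 Hf).
have w2n : w2 != 0 by apply: contraNneq w4n; rewrite /w4 => ->; rewrite !br0r.
have Pw2 : P w2 = (z + z + e) *: w2.
  by rewrite /w2 Hpre Pu Pv !brZl !brZr !scalerDl.
have Pw4 : P w4 = (z + z + (z + z + e)) *: w4.
  by rewrite /w4 Hpre Pu Pw2 !brZl !brZr !scalerDl.
exact: (@final_contra z e m Hm zm em (@eig_root L P HP m w2 _ Pw2 w2n (Hper _)) (@eig_root L P HP m w4 _ Pw4 w4n (Hper _))).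
Qed.
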